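(* Let $2\le j<k$ be integers and consider the election $E(j,k)$ with committees $W=D_{k-2}\cup\{x,a\}$ and $W'=D_{k-2}\cup\{y,b\}$. Then $\Delta(W,a,b)=\delta(j,k)$ and $\Delta(W',b,a)=\delta(j,k)$, where $\delta(j,k)=\frac{j!}{\prod_{j'=0}^{j}(k-j')}>0$; in particular both swaps strictly increase the PAV score.
   Context: An approval election is a tuple $(N,C,(A_v)_{v\in N},k)$ with voters $N$, candidates $C$, ballots $A_v\subseteq C$ and target committee size $k$. The PAV score of $W\subseteq C$ is $\textsc{pavsc}(W)=\sum_{v\in N}\sum_{i=1}^{|A_v\cap W|}\frac1i$, and $\Delta(W,a,b)=\textsc{pavsc}((W\setminus\{a\})\cup\{b\})-\textsc{pavsc}(W)$. Let $D_\ell=\{d_1,\dots,d_\ell\}$ denote a set of dummy candidates ($D_0=\varnothing$, $D_\ell\subseteq D_{\ell+1}$). Elections $F(j,k)$, for $1\le j<k$, with candidate set $D_{k-1}\cup\{a,b\}$ and committee size $k$, are defined recursively. $F(1,k)$ has two voters with ballots $D_{k-1}\cup\{a\}$ and $D_{k-2}\cup\{b\}$. For $j>1$, take a copy of $F(j-1,k)$ with candidates $D_{k-1}\cup\{a_1,b_1\}$ and a copy of $F(j-1,k-1)$ with candidates $D_{k-2}\cup\{a_2,b_2\}$, with disjoint voter sets; in every ballot of the first copy replace $a_1$ by $b$ and $b_1$ by $a$, in every ballot of the second copy replace $a_2$ by $a$ and $b_2$ by $b$; $F(j,k)$ has the union of the two voter sets with these ballots, candidates $D_{k-1}\cup\{a,b\}$,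 and committee size $k$. The election $E(j,k)$ (for $2\le j<k$) is defined as follows: take two copies of $F(j-1,k-1)$ with disjoint voter sets $N_1,N_2$ and candidates $D_{k-2}\cup\{a_1,b_1\}$ and $D_{k-2}\cup\{a_2,b_2\}$ respectively; in ballots of voters in $N_1$ replace $a_1$ by $b$ and $b_1$ by $a$ and add a new candidate $x$; in ballots of voters in $N_2$ replace $a_2$ by $a$ and $b_2$ by $b$ and add a new candidate $y$. $E(j,k)$ has voters $N_1\cup N_2$, candidates $D_{k-2}\cup\{x,y,a,b\}$ and committee size $k$. *)

(* Defs.v *)
From HB Require Import structures.
From mathcomp Require Import all_boot all_order all_algebra.
Set Implicit Arguments. Unset Strict Implicit. Unset Printing Implicit Defensive.
Import Order.TTheory GRing.Theory Num.Theory.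

(* Candidates: dummies d_i (i >= 1), and the named candidates a, b, x, y. *)
Inductive cand := Dummy of nat | CA | CB | CX | CY.

Definition cand_code (c : cand) : nat + nat :=
  match c with Dummy i => inl i | CA => inr 0 | CB => inr 1 | CX => inr 2 | CY => inr 3 end.
Definition cand_decode (s : nat + nat) : cand :=
  match s with inl i => Dummy i | inr 0 => CA | inr 1 => CB | inr 2 => CX | inr _ => CY end.
Lemma cand_codeK : cancel cand_code cand_decode. Proof. by case. Qed.
HB.instance Definition _ := Equality.copy cand (can_type cand_codeK).

(* A ballot is a (duplicate-free) list of approved candidates; an election's
   voter profile is the list of ballots, one per voter. *)
Definition ballot := seq cand.
Definition profile := seq ballot.

Definition D (l : nat) : seq cand := [seq Dummy i | i <- iota 1 l].

Definition pavsc (P : profile) (W : seq cand) : rat :=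
  \sum_(v <- P) \sum_(1 <= i < (count (fun c => c \in W) v).+1) (i%:R)^-1.

Definition Delta (P : profile) (W : seq cand) (a b : cand) : rat :=
  pavsc P (b :: [seq c <- W | c != a]) - pavsc P W.

Definition swapab (c : cand) : cand :=
  match c with CA => CB | CB => CA | c => c end.

(* F(j,k): candidates D_{k-1} u {a,b}, committee size k. *)
Fixpoint F (j k : nat) : profile :=
  match j with
  | 0 => [::]
  | j'.+1 =>
      if j' is 0 then [:: D k.-1 ++ [:: CA]; D (k.-2) ++ [:: CB]]
      else [seq map swapab v | v <- F j' k] ++ F j' k.-1
  end.

(* E(j,k): candidates D_{k-2} u {x,y,a,b}, committee size k. *)
Definition E (j k : nat) : profile :=
  [seq CX :: map swapab v | v <- F j.-1 k.-1] ++ [seq CY :: v | v <- F j.-1 k.-1].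

Definition delta (j k : nat) : rat :=
  (j`!)%:R / \prod_(0 <= j' < j.+1) ((k - j')%:R).

(* Main.v *)
Require Import Defs.
From mathcomp Require Import all_boot all_order all_algebra.
From mathcomp Require Import ring lra.
Import Order.TTheory GRing.Theory Num.Theory.
Local Open Scope ring_scope.

Definition hn (n : nat) : rat := \sum_(1 <= i < n.+1) (i%:R)^-1.
Lemma pavscE P W : pavsc P W = \sum_(v <- P) hn (count (fun c => c \in W) v).
Proof. by []. Qed.

Lemma hnS n : hn n.+1 = hn n + (n.+1%:R)^-1.
Proof. by rewrite /hn big_nat_recr. Qed.

Lemma memD M c : (c \in D M) = if c is Dummy i then (0 < i <= M)%N else false.
Proof.
rewrite /D; case: c => [i||||].
- by rewrite mem_map; [rewrite mem_iota add1n ltnS | move=> x y []].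
all: by apply/mapP; case.
Qed.

Definition cnt M (v : ballot) := count (fun c => c \in D M) v.
Definition H M s (v : ballot) : rat :=
  hn (s + cnt M v + count (pred1 CB) v)%N - hn (s + cnt M v + count (pred1 CA) v)%N.
Definition G M s (P : profile) : rat := \sum_(v <- P) H M s v.

Lemma H_swap M s v : H M s (map swapab v) = - H M s v.
Proof.
rewrite /H /cnt !count_map opprB.
have e1 : count (preim swapab (fun c => c \in D M)) v = count (fun c => c \in D M) v.
  by apply: eq_count => c; case: c => [i||||] /=; rewrite ?memD.
have e2 : count (preim swapab (pred1 CB)) v = count (pred1 CA) v.
  by apply: eq_count => c; case: c => [i||||].
have e3 : count (preim swapab (pred1 CA)) v = count (pred1 CB) v.
  by apply: eq_count => c; case: c => [i||||].
by rewrite e1 e2 e3.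
Qed.

Lemma G_cat M s P Q : G M s (P ++ Q) = G M s P + G M s Q.
Proof. by rewrite /G big_cat. Qed.

Lemma G_swap M s P : G M s [seq map swapab v | v <- P] = - G M s P.
Proof. by rewrite /G big_map -sumrN; apply: eq_bigr => v _; rewrite H_swap. Qed.

Lemma cntD M t : (t <= M)%N -> cnt M (D t) = t.
Proof.
move=> tM; rewrite /cnt /D count_map.
rewrite (@eq_in_count _ _ predT) ?count_predT ?size_iota // => i.
by rewrite mem_iota /= memD add1n ltnS => /andP[-> h]; rewrite (leq_trans h tM).
Qed.

Lemma cntB_D t : count (pred1 CB) (D t) = 0%N.
Proof. by rewrite /D count_map (@eq_count _ _ pred0) ?count_pred0. Qed.
Lemma cntA_D t : count (pred1 CA) (D t) = 0%N.
Proof. by rewrite /D count_map (@eq_count _ _ pred0) ?count_pred0. Qed.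

Lemma H_A M s t : (t <= M)%N -> H M s (D t ++ [:: CA]) = - ((s + t).+1%:R)^-1.
Proof.
move=> tM; rewrite /H /cnt count_cat -/(cnt M (D t)) cntD // count_cat cntB_D count_cat cntA_D /=.
rewrite memD !addn0 addn1 addnS hnS !addn0; ring.
Qed.

Lemma H_B M s t : (t <= M)%N -> H M s (D t ++ [:: CB]) = ((s + t).+1%:R)^-1.
Proof.
move=> tM; rewrite /H /cnt count_cat -/(cnt M (D t)) cntD // count_cat cntB_D count_cat cntA_D /=.
rewrite memD !addn0 addn1 addnS hnS !addn0; ring.
Qed.

Definition ff (x : rat) n := \prod_(i < n) (x - i%:R).

Lemma ffS x n : ff x n.+1 = ff x n * (x - n%:R).
Proof. by rewrite /ff big_ord_recr. Qed.

Lemma ffSl (m n : nat) : ff m.+1%:R n.+1 = m.+1%:R * ff m%:R n.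
Proof.
rewrite /ff big_ord_recl subr0; congr (_ * _); apply: eq_bigr => i _.
rewrite /= (_ : bump 0 i = i.+1) //. 
rewrite !mulrS; ring.
Qed.

Lemma ff_neq0 (m n : nat) : (n <= m)%N -> ff m%:R n != 0.
Proof.
move=> h; rewrite /ff; apply/prodf_neq0 => i _.
by rewrite subr_eq0 eqr_nat; apply/eqP => e; move: (ltn_ord i); rewrite -e ltnNge h.
Qed.

Lemma key (m n : nat) : (n.+2 <= m)%N ->
  (n.+1)`!%:R / ff m%:R n.+2 - (n.+1)`!%:R / ff m.+1%:R n.+2 = (n.+2)`!%:R / ff m.+1%:R n.+3.
Proof.
move=> h.
rewrite !ffSl !(ffS _ n.+1).
have h1 : ff m%:R n.+1 != 0 by apply: ff_neq0; apply: ltnW.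
have h2 : (m%:R - n.+1%:R : rat) != 0.
  by rewrite subr_eq0 eqr_nat; apply/eqP => e; move: h; rewrite e ltnn.
have h3 : (m.+1%:R : rat) != 0 by rewrite pnatr_eq0.
rewrite (factS n.+1) natrM.
have -> : (n.+2%:R : rat) = m.+1%:R - (m%:R - n.+1%:R) by rewrite !mulrS; ring.
field.
by move: h2 h3; rewrite !mulrS h1 => -> ->.
Qed.

Lemma G_F M s j k : (0 < j)%N -> (j < k)%N -> (k <= M.+1)%N ->
  G M s (F j k) = j`!%:R / ff (s + k)%:R j.+1.
Proof.
elim: j k => [//|[|j] IH] k _ hjk hkM.
- case: k hjk hkM => [|[|k']] // _ hkM.
  have -> : F 1 k'.+2 = [:: D k'.+1 ++ [:: CA]; D k' ++ [:: CB]] by [].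
  rewrite /G big_cons big_cons big_nil addr0 H_A // H_B; last by apply: ltnW.
  rewrite !addnS !ffSl /ff big_ord0.
  rewrite !mulrS; field.
  by rewrite -natrD -!mulrS !pnatr_eq0.
- case: k hjk hkM => [|k'] // hjk hkM.
  rewrite /= G_cat G_swap !IH //; last by apply: ltnW.
  rewrite addnS -key; first by ring.
  - by rewrite (leq_trans _ (leq_addl s k')).
  - by apply: ltnW.
Qed.

From mathcomp Require Import zify.

Definition nXY (c : cand) := (c != CX) && (c != CY).

Lemma F_noXY j k : all (fun v => all nXY v) (F j k).
Proof.
elim: j k => [//|[|j] IH] k.
- by rewrite /= !all_cat /D !all_map andbT; apply/andP; split; apply/andP; split=> //; apply/allP.
- rewrite /= all_cat IH andbT all_map; apply/allP => v /(allP (IH k)) hv /=.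
  by rewrite all_map; apply/allP => c /(allP hv); case: c.
Qed.

Lemma eqD i c : (Dummy i == c) = if c is Dummy j then i == j else false.
Proof. by case: c. Qed.

Definition W1 M := D M ++ [:: CX; CA].
Definition W1' M := CB :: [seq c <- W1 M | c != CA].
Definition W2 M := D M ++ [:: CY; CB].
Definition W2' M := CA :: [seq c <- W2 M | c != CB].
Arguments W1 : simpl never.
Arguments W1' : simpl never.
Arguments W2 : simpl never.
Arguments W2' : simpl never.

Lemma memW1 M c : (c \in W1 M) = match c with Dummy i => (0<i<=M)%N | CA | CX => true | _ => false end.
Proof. by case: c => [i||||]; rewrite ?/W1' ?/W2' ?/W1 ?/W2 ?in_cons ?mem_filter mem_cat memD !inE /= ?eqD ?orbF. Qed.
Lemma memW1' M c : (c \in W1' M) = match c with Dummy i => (0<i<=M)%N | CB | CX => true | _ => false end.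
Proof. by case: c => [i||||]; rewrite ?/W1' ?/W2' ?/W1 ?/W2 ?in_cons ?mem_filter mem_cat memD !inE /= ?eqD ?orbF. Qed.
Lemma memW2 M c : (c \in W2 M) = match c with Dummy i => (0<i<=M)%N | CB | CY => true | _ => false end.
Proof. by case: c => [i||||]; rewrite ?/W1' ?/W2' ?/W1 ?/W2 ?in_cons ?mem_filter mem_cat memD !inE /= ?eqD ?orbF. Qed.
Lemma memW2' M c : (c \in W2' M) = match c with Dummy i => (0<i<=M)%N | CA | CY => true | _ => false end.
Proof. by case: c => [i||||]; rewrite ?/W1' ?/W2' ?/W1 ?/W2 ?in_cons ?mem_filter mem_cat memD !inE /= ?eqD ?orbF. Qed.

Ltac cntt := let c := fresh "c" in let u := fresh "u" in let IH := fresh "IH" in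
  let hc := fresh "hc" in
  move=> u; elim: u => [|c u IH] //= /andP[hc /IH ->];
  rewrite ?memW1 ?memW1' ?memW2 ?memW2' /cnt /=;
  case: c hc => [i||||] //= _; rewrite ?memD; lia.

Lemma L1 M : forall u, all nXY u -> count (fun c => c \in W1 M) (map swapab u) = (cnt M u + count (pred1 CB) u)%N. Proof. cntt. Qed.
Lemma L2 M : forall u, all nXY u -> count (fun c => c \in W1' M) (map swapab u) = (cnt M u + count (pred1 CA) u)%N. Proof. cntt. Qed.
Lemma L3 M : forall u, all nXY u -> count (fun c => c \in W1 M) u = (cnt M u + count (pred1 CA) u)%N. Proof. cntt. Qed.
Lemma L4 M : forall u, all nXY u -> count (fun c => c \in W1' M) u = (cnt M u + count (pred1 CB) u)%N. Proof. cntt. Qed.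
Lemma L5 M : forall u, all nXY u -> count (fun c => c \in W2 M) (map swapab u) = (cnt M u + count (pred1 CA) u)%N. Proof. cntt. Qed.
Lemma L6 M : forall u, all nXY u -> count (fun c => c \in W2' M) (map swapab u) = (cnt M u + count (pred1 CB) u)%N. Proof. cntt. Qed.
Lemma L7 M : forall u, all nXY u -> count (fun c => c \in W2 M) u = (cnt M u + count (pred1 CB) u)%N. Proof. cntt. Qed.
Lemma L8 M : forall u, all nXY u -> count (fun c => c \in W2' M) u = (cnt M u + count (pred1 CA) u)%N. Proof. cntt. Qed.

Lemma in_F_noXY j k u : u \in F j k -> all nXY u.
Proof. by move=> h; apply: (allP (F_noXY j k)). Qed.

Lemma DeltaE1 M n m :
  Delta (E n.+2 m.+1) (W1 M) CA CB = G M 0 (F n.+1 m) - G M 1 (F n.+1 m).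
Proof.
rewrite /Delta (_ : CB :: _ = W1' M) // !pavscE -sumrB /E big_cat !big_map.
rewrite addrC /G -sumrN; congr (_ + _); apply: eq_big_seq => u hu; have {}hu := in_F_noXY n.+1 m u hu.
- rewrite /= L2 // L1 // !memW1 !memW1' /H opprB /=.
  by rewrite !addnA.
- rewrite /= (L3 M u hu) (L4 M u hu) !memW1 !memW1' /H /=.
  by rewrite !add0n.
Qed.

Lemma DeltaE2 M n m :
  Delta (E n.+2 m.+1) (W2 M) CB CA = G M 0 (F n.+1 m) - G M 1 (F n.+1 m).
Proof.
rewrite /Delta (_ : CA :: _ = W2' M) // !pavscE -sumrB /E big_cat !big_map.
rewrite /G -sumrN; congr (_ + _); apply: eq_big_seq => u hu; have {}hu := in_F_noXY n.+1 m u hu.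
- rewrite /= L5 // L6 // !memW2 !memW2' /H /=.
  by rewrite !add0n.
- rewrite /= L7 // L8 // !memW2 !memW2' /H opprB /=.
  by congr (hn _ - hn _); lia.
Qed.

Lemma deltaE j k : (j < k)%N -> delta j k = j`!%:R / ff k%:R j.+1.
Proof.
move=> h; rewrite /delta /ff big_mkord; congr (_ / _); apply: eq_bigr => i _.
rewrite natrB //; have := ltn_ord i; lia.
Qed.

Theorem corollary6 (j k : nat) (hj : (2 <= j)%N) (hjk : (j < k)%N) :
  Delta (E j k) (D (k - 2) ++ [:: CX; CA]) CA CB = delta j k /\
  Delta (E j k) (D (k - 2) ++ [:: CY; CB]) CB CA = delta j k /\
  0 < delta j k.
Proof.
case: j hj hjk => [|[|n]] // _ hjk.
case: k hjk => [|m] // hjk.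
have hM : (m <= (m.+1 - 2).+1)%N by lia.
have e : G (m.+1 - 2) 0 (F n.+1 m) - G (m.+1 - 2) 1 (F n.+1 m) = delta n.+2 m.+1.
  rewrite !G_F //; try lia.
  rewrite add0n add1n key ?deltaE //; lia.
split; [|split].
- by rewrite -e -DeltaE1.
- by rewrite -e -DeltaE2.
- rewrite /delta divr_gt0 // ?ltr0n ?fact_gt0 //.
  rewrite big_seq; apply: prodr_gt0 => i; rewrite mem_index_iota ltr0n => /andP[_ hi]; lia.
Qed.
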